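(* Let $G$ be a finite simple graph with edge ideal $I=I(G)$, fix a total order $L_1>L_2>\dots>L_k$ on the edges (minimal monomial generators) of $I$, and for each $n\geq 1$ let $L^{(n)}_1>L^{(n)}_2>\cdots$ be the minimal monomial generators of $I^n$ in the order described in the context. Then for every $n\geq1$, every $k'\geq1$ and every $j\leq k'$: if $(L^{(n)}_j : L^{(n)}_{k'+1})$ is not contained in $(I^{n+1}:L^{(n)}_{k'+1})$ and $L^{(n)}_j$ belongs to an edge that comes (strictly) before the edge that $L^{(n)}_{k'+1}$ belongs to, then there exists $i\leq k'$ such that $(L^{(n)}_i : L^{(n)}_{k'+1})$ is generated by a single variable, $(L^{(n)}_j : L^{(n)}_{k'+1})\subseteq (L^{(n)}_i : L^{(n)}_{k'+1})$, and $L^{(n)}_i$ belongs to an edge that comes before or is equal to the edge that $L^{(n)}_j$ belongs to.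
   Context: $S=K[\,x : x\in V(G)\,]$ is the polynomial ring over a field $K$ on the vertices and $I(G)=(xy : xy\text{ an edge})$. For monomials $m,m'$, $(m:m')$ denotes $((m):(m'))$. Ordering: each minimal monomial generator $M$ of $I^n$ can be written as $L_1^{a_1}\cdots L_k^{a_k}$ with $\sum a_i=n$; its maximal expression is the lexicographically largest such exponent vector. For minimal generators $M,N$ of $I^n$, $M>N$ iff the maximal expression of $M$ is lexicographically larger than that of $N$; for $n=1$ this is the fixed order. $L^{(n)}_1>L^{(n)}_2>\cdots$ lists all minimal monomial generators of $I^n$ decreasingly. The edge $L_a$ comes before $L_b$ if $a<b$. For $n\geq2$ and monomials $m_1\in\mathrm{Mingens}(I^{p})$, $m_2\in\mathrm{Mingens}(I^n)$ with $n>p$, write $m_1\mid^{\mathrm{edge}} m_2$ if $m_2=m_1m_3$ for some minimal monomial generator $m_3$ of $I^{n-p}$. A minimal generator $m$ of $I^n$, $n\ge2$, belongs to the edge $L_i$ if $i$ is the least index with $L_i\mid^{\mathrm{edge}} m$; for $n=1$, $L_i$ belongs to $L_i$. *)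

(* Defs.v *)
(* Monomials of S = K[x : x in V] are exponent vectors
   V -> nat; a monomial ideal is represented by the set of monomials it
   contains (it is determined by them). *)
From mathcomp Require Import all_boot.
Set Implicit Arguments. Unset Strict Implicit. Unset Printing Implicit Defensive.

Section Defs.
Variable V : finType.

Definition mono := {ffun V -> nat}.
Definition mone : mono := [ffun _ => 0].
Definition mmul (a b : mono) : mono := [ffun v => a v + b v].
Definition mdvd (a b : mono) : Prop := forall v, a v <= b v.
Definition mvar (x : V) : mono := [ffun v => nat_of_bool (v == x)].

Definition mono_ideal := mono -> Prop.
Definition principal (u : mono) : mono_ideal := fun w => mdvd u w.
Definition colon (J : mono_ideal) (m : mono) : mono_ideal := fun w => J (mmul w m).
Definition msubset (J1 J2 : mono_ideal) : Prop := forall w, J1 w -> J2 w.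
Definition gen_by_var (J : mono_ideal) : Prop :=
  exists x, forall w, J w <-> principal (mvar x) w.
Definition colon_mm (m m' : mono) : mono_ideal := colon (principal m) m'.

Definition simple_graph (e : rel V) : Prop := irreflexive e /\ symmetric e.
Definition is_edge (e : rel V) (S : {set V}) : Prop :=
  exists x y, e x y /\ S = [set x; y].
(* L = [:: L_1; ...; L_k] lists all edges exactly once, L_1 > L_2 > ... *)
Definition edge_order (e : rel V) (L : seq {set V}) : Prop :=
  uniq L /\ forall S, S \in L <-> is_edge e S.
Definition edge_mono (S : {set V}) : mono := [ffun v => nat_of_bool (v \in S)].
(* 1-based edge L_i *)
Definition Ledge (L : seq {set V}) (i : nat) : mono := edge_mono (nth set0 L i.-1).

Definition prod_expr (L : seq {set V}) (a : seq nat) : mono :=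
  [ffun v => \sum_(i < size L) nth 0 a i * nat_of_bool (v \in nth set0 L i)].

Definition pow_ideal (L : seq {set V}) (n : nat) : mono_ideal :=
  fun m => exists a : seq nat,
    [/\ size a = size L, sumn a = n & mdvd (prod_expr L a) m].
Definition mingen (L : seq {set V}) (n : nat) (m : mono) : Prop :=
  pow_ideal L n m /\ forall m', pow_ideal L n m' -> mdvd m' m -> m' = m.

Fixpoint lexlt (a b : seq nat) : bool :=
  match a, b with
  | x :: a', y :: b' => (x < y) || ((x == y) && lexlt a' b')
  | _, _ => false
  end.

Definition is_expr (L : seq {set V}) (n : nat) (m : mono) (a : seq nat) : Prop :=
  [/\ size a = size L, sumn a = n & prod_expr L a = m].
Definition max_expr L n m a : Prop :=
  is_expr L n m a /\ forall b, is_expr L n m b -> ~~ lexlt a b.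
Definition gtM (L : seq {set V}) (n : nat) (M N : mono) : Prop :=
  exists a b, [/\ max_expr L n M a, max_expr L n N b & lexlt b a].

Definition gens_list (L : seq {set V}) (n : nat) (s : seq mono) : Prop :=
  [/\ uniq s, (forall m, m \in s <-> mingen L n m) &
      forall i j, i < j < size s -> gtM L n (nth mone s i) (nth mone s j)].
(* 1-based access L^(n)_j *)
Definition Lg (s : seq mono) (j : nat) : mono := nth mone s j.-1.

Definition edge_dvd L (p : nat) (m1 : mono) (n : nat) (m2 : mono) : Prop :=
  [/\ mingen L p m1, mingen L n m2 &
      exists m3, mingen L (n - p) m3 /\ m2 = mmul m1 m3].

Definition belongs (L : seq {set V}) (n : nat) (m : mono) (i : nat) : Prop :=
  1 <= i <= size L /\
  if n == 1 then m = Ledge L i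
  else edge_dvd L 1 (Ledge L i) n m /\
       forall i', 1 <= i' < i -> ~ edge_dvd L 1 (Ledge L i') n m.

End Defs.

(* Main.v *)
Require Import Defs.
From mathcomp Require Import all_boot.
From mathcomp Require Import zify.
From Stdlib Require Import Classical.
Set Implicit Arguments. Unset Strict Implicit. Unset Printing Implicit Defensive.

Ltac crush :=
  repeat match goal with |- context [?a == ?b] =>
    case: (eqVneq a b) => [?|?]; try subst end;
  try (match goal with H : is_true (?x != ?x) |- _ => by rewrite eqxx in H end);
  try lia.

Ltac vsplit v :=
  repeat match goal with
  | |- context [v == ?y] => case: (eqVneq v y) => [?|?]; [subst v; rewrite ?eqxx|]
  | |- context [?y == v] => case: (eqVneq y v) => [?|?]; [subst v; rewrite ?eqxx|]
  end.

Ltac simpneq :=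
  repeat match goal with H : is_true (?x != ?y) |- _ =>
    let H1 := fresh in let H2 := fresh in
    have H1 := negbTE H;
    (have H2 : (y == x) = false by (rewrite eq_sym; exact: negbTE H));
    rewrite ?H1 ?H2; clear H H1 H2 end.

Ltac clia := repeat match goal with H : is_true _ |- _ => clear H end; lia.

Ltac vlia v := vsplit v; simpneq; clia.

Ltac gen_atoms := repeat match goal with |- context [nat_of_bool (?x == ?y)] =>
  generalize (nat_of_bool (x == y)); intro end.

Ltac aceq := apply/ffunP; intro; rewrite !ffunE; gen_atoms; clia.

Section Aux.
Variable V : finType.
Variable L : seq {set V}.
Hypothesis Ledges : forall S : {set V}, S \in L -> exists p q, p != q /\ S = [set p; q].

Definition E (b c : V) : mono V := mmul (mvar b) (mvar c).
Definition P m (M : mono V) := exists a, is_expr L m M a.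
Definition isE b c := exists i, i < size L /\ edge_mono (nth set0 L i) = E b c.

Lemma mmulE (x y : mono V) v : mmul x y v = x v + y v.
Proof. by rewrite ffunE. Qed.
Lemma mvarE (x v : V) : mvar x v = (v == x) :> nat.
Proof. by rewrite ffunE. Qed.
Lemma EE (b c v : V) : E b c v = (v == b) + (v == c).
Proof. by rewrite !ffunE. Qed.
Lemma EC (b c : V) : E b c = E c b.
Proof. apply/ffunP=> v; rewrite !EE; lia. Qed.
Lemma edge_monoE (S : {set V}) (v : V) : edge_mono S v = (v \in S).
Proof. by rewrite ffunE. Qed.

Lemma prod_set a i : i < size L ->
  prod_expr L (set_nth 0 a i (nth 0 a i).+1) = mmul (prod_expr L a) (edge_mono (nth set0 L i)).
Proof.
move=> Hi; apply/ffunP=> v; rewrite !ffunE.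
have -> : \sum_(k < size L) nth 0 (set_nth 0 a i (nth 0 a i).+1) k * (v \in nth set0 L k)
   = \sum_(k < size L) (nth 0 a k * (v \in nth set0 L k) + (k == i :> nat) * (v \in nth set0 L k)).
  apply: eq_bigr => k _; rewrite nth_set_nth /=; case: eqP => [->|_]; rewrite ?eqxx /=; lia.
rewrite big_split /=; congr (_ + _).
rewrite (bigD1 (Ordinal Hi)) //= eqxx big1 ?addn0 ?mul1n //.
by move=> k /eqP Hk; have -> : (val k == i) = false by apply/eqP=> E'; apply: Hk; apply: val_inj.
Qed.

Lemma expr_add m M a i : is_expr L m M a -> i < size L ->
  is_expr L m.+1 (mmul M (edge_mono (nth set0 L i))) (set_nth 0 a i (nth 0 a i).+1).
Proof.
case=> Hs Hsum HM Hi; split.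
- by rewrite size_set_nth Hs; lia.
- rewrite sumn_set_nth0 Hsum; lia.
- by rewrite prod_set // HM.
Qed.

Lemma expr_rem m M a k : is_expr L m M a -> k < size L -> 0 < nth 0 a k ->
  exists m' a', [/\ m = m'.+1, is_expr L m' (prod_expr L a') a' &
    M = mmul (prod_expr L a') (edge_mono (nth set0 L k))].
Proof.
case=> Hs Hsum HM Hk Hpos.
set a' := set_nth 0 a k (nth 0 a k).-1.
have Ha : set_nth 0 a' k (nth 0 a' k).+1 = a.
  apply: (@eq_from_nth _ 0).
    rewrite !size_set_nth Hs; lia.
  move=> j _; rewrite /a' !nth_set_nth /=; case: (eqVneq j k) => [->|Hne]; rewrite ?eqxx ?(negbTE Hne) /= ?nth_set_nth /= ?(negbTE Hne); lia.
have Hsa : sumn a' = m.-1.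
  have := Hsum; rewrite -Ha sumn_set_nth0; lia.
have Hm : m = (sumn a').+1 by have := Hsum; rewrite -Ha sumn_set_nth0; lia.
exists m.-1, a'; split.
- by rewrite Hm Hsa; lia.
- split=> //; rewrite /a' size_set_nth Hs; lia.
- by rewrite -prod_set // Ha HM.
Qed.


Lemma edge_set (p q : V) : p != q -> edge_mono [set p; q] = E p q.
Proof.
move=> Hpq; apply/ffunP=> v; rewrite edge_monoE EE !inE.
case: (eqVneq v p) => [->|]; case: (eqVneq v q) => //= Hvq; try lia; by move: Hpq; rewrite Hvq eqxx.
Qed.

Lemma P_add m M b c : P m M -> isE b c -> P m.+1 (mmul M (E b c)).
Proof.
case=> a Ha [i [Hi HE]]; exists (set_nth 0 a i (nth 0 a i).+1).
by rewrite -HE; apply: expr_add.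
Qed.

Lemma P_rem m M x : P m M -> 0 < M x ->
  exists m' c M', [/\ m = m'.+1, x != c, isE x c, P m' M' & M = mmul M' (E x c)].
Proof.
case=> a Ha Hx.
have [k Hk] : exists k : 'I_(size L), 0 < nth 0 a k * (x \in nth set0 L k).
  apply: NNPP => H; move: Hx; case: Ha => _ _ <-; rewrite ffunE big1 // => k _.
  by case: (posnP (nth 0 a k * (x \in nth set0 L k))) => // H'; exfalso; apply: H; exists k.
have Hak : 0 < nth 0 a k by move: Hk; case: (nth 0 a k).
have Hxk : x \in nth set0 L k by move: Hk; case: (x \in _); rewrite ?muln0.
have [m' [a' [Hm Ha' HM]]] := expr_rem Ha (ltn_ord k) Hak.
have [p [q [Hpq HS]]] := Ledges (mem_nth set0 (ltn_ord k)).
have [c [Hxc HSc]] : exists c, x != c /\ nth set0 L k = [set x; c].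
  move: Hxk; rewrite HS !inE => /orP [/eqP ->|/eqP ->].
  - by exists q.
  - by exists p; split; [rewrite eq_sym | rewrite setUC].
exists m', c, (prod_expr L a'); split=> //.
- by exists k; split=> //; rewrite HSc edge_set.
- by exists a'.
- by rewrite HM HSc edge_set.
Qed.

Lemma sumn_ord (a : seq nat) : sumn a = \sum_(k < size a) nth 0 a k.
Proof.
elim: a => [|x a IH]; first by rewrite big_ord0.
by rewrite big_ord_recl /= IH.
Qed.

Lemma P_deg m M : P m M -> \sum_v M v = 2 * m.
Proof.
case=> a [Hs Hsum HM]; subst M.
under eq_bigr do rewrite ffunE.
rewrite exchange_big /=.
have -> : \sum_(k < size L) \sum_v nth 0 a k * (v \in nth set0 L k)
   = \sum_(k < size L) 2 * nth 0 a k.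
  apply: eq_bigr => k _; rewrite -big_distrr /= mulnC; congr (_ * _).
  have [p [q [Hpq ->]]] := Ledges (mem_nth set0 (ltn_ord k)).
  have -> : 2 = #|[set p; q]| by rewrite cards2 Hpq.
  rewrite -sum1_card [RHS]big_mkcond /=.
  by apply: eq_bigr => v _; case: (v \in _).
by rewrite -big_distrr /= -Hsum sumn_ord Hs.
Qed.

Lemma le_sum_eq (X Y : mono V) : (forall v, X v <= Y v) ->
  \sum_v X v = \sum_v Y v -> X = Y.
Proof.
move=> Hle Hs; have H0 : \sum_v (Y v - X v) = 0.
  by rewrite sumnB // Hs subnn.
apply/ffunP => v; apply/eqP; rewrite eqn_leq Hle /=.
have /eqP := H0; rewrite sum_nat_eq0 => /forallP /(_ v) /=.
rewrite subn_eq0 => ->. done.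
Qed.

Lemma P0 m M : P m M -> m = 0 -> M = mone V.
Proof.
move=> HP Hm; symmetry; apply: le_sum_eq => [v|]; first by rewrite ffunE.
by rewrite (P_deg HP) Hm big1 // => v _; rewrite ffunE.
Qed.

Definition Concl n (ee F M : mono V) :=
  let N := mmul ee F in
  (exists x x', (forall v, M v + (v == x) + (v == x') <= maxn (N v) (M v))
               /\ P n.+2 (mmul M (E x x')))
  \/ (exists x z G, [/\ M x < N x, P n G & mmul M (mvar x) = mmul (mmul ee G) (mvar z)])
  \/ (exists G, P n G /\ M = mmul ee G).

Lemma case1 n (p q : V) F M : p != q -> isE p q -> P n F -> P n.+1 M ->
  M p < mmul (E p q) F p -> Concl n (E p q) F M.
Proof.
move=> Hpq HE HF HM Hp; rewrite /Concl /=.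
case: (ltnP (M q) (mmul (E p q) F q)) => Hq.
- left; exists p, q; split; last exact: P_add.
  move=> v; move: Hp Hq; rewrite !mmulE !mvarE; crush.
- have Hq1 : 0 < M q by move: Hq; rewrite !mmulE !mvarE eqxx; lia.
  have [m' [t [M' [Hm Hqt HEt HM' HMe]]]] := P_rem HM Hq1; subst M.
  case: (eqVneq t p) => [Htp|Htp].
  + right; right; exists M'; split; first by case: Hm => ->.
    by subst t; apply/ffunP => v; rewrite !mmulE !mvarE; crush.
  + right; left; exists p, t, M'; split.
    * by [].
    * by case: Hm => ->.
    * apply/ffunP => v; rewrite !mmulE !mvarE; crush.
Qed.

Lemma lemU n : forall (p q : V) F M, p != q -> isE p q -> P n F -> P n.+1 M ->
  Concl n (E p q) F M.
Proof.
elim/ltn_ind: n => n IH p q F M Hpq HE HF HM.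
case: (ltnP (M p) (mmul (E p q) F p)) => Hp; first exact: case1.
case: (ltnP (M q) (mmul (E p q) F q)) => Hq.
  rewrite EC; apply: case1 => //; first by rewrite eq_sym.
  - by case: HE => i [Hi HEi]; exists i; rewrite EC.
  - by rewrite EC.
rewrite /Concl /=.
case: (pickP (fun a => M a < mmul (E p q) F a)) => [a Ha|Hnone]; last first.
  right; right; exists F; split=> //.
  have HN : P n.+1 (mmul (E p q) F).
    have := P_add HF HE; congr P; aceq.
  symmetry; apply: le_sum_eq; last by rewrite (P_deg HN) (P_deg HM).
  by move=> v; move: (Hnone v) => /= /negbT; rewrite -leqNgt.
have Hap : a != p by apply/eqP => Hap; subst a; move: Ha Hp => /=; clia.
have Haq : a != q by apply/eqP => Haq; subst a; move: Ha Hq => /=; clia.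
have Fa : 0 < F a by move: Ha => /=; rewrite !mmulE !mvarE (negbTE Hap) (negbTE Haq); clia.
have [n' [b [F' [Hn Hab HEab HF' HFe]]]] := P_rem HF Fa; subst F n.
move: Ha => /= Ha.
case: (ltnP (M b) (mmul (E p q) (mmul F' (E a b)) b)) => Hb.
  left; exists a, b; split; last exact: P_add.
  move=> v; move: Ha Hb; rewrite !mmulE !mvarE; vlia v.
have Mb : 0 < M b by move: Hb; rewrite !mmulE !mvarE eqxx; clia.
have [m'' [c [M' [Hm Hbc HEbc HM' HMe]]]] := P_rem HM Mb; subst M.
case: Hm => Hm; subst m''.
have [A|[B|C]] := IH n' (ltnSn n') p q F' M' Hpq HE HF' HM'.
- case: A => x [x' [Hbnd HP']].
  left.
  case: (eqVneq x c) => Hxc.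
    subst x; exists a, x'; split.
      move=> v; have := Hbnd v; move: Ha; rewrite !mmulE !mvarE; vlia v.
    have := P_add HP' HEab; congr P; aceq.
  case: (eqVneq x' c) => Hx'c.
    subst x'; exists x, a; split.
      move=> v; have := Hbnd v; move: Ha; rewrite !mmulE !mvarE; vlia v.
    have := P_add HP' HEab; congr P; aceq.
  exists x, x'; split.
    move=> v; have := Hbnd v; rewrite !mmulE !mvarE; vlia v.
  have := P_add HP' HEbc; congr P; aceq.
- case: B => x [z [G [Hx HG Heq]]].
  right; left.
  case: (eqVneq x c) => Hxc.
    subst x; exists a, z, (mmul G (E a b)); split=> //; first exact: P_add.
    apply/ffunP => v; move/ffunP: Heq => /(_ v); rewrite !mmulE !mvarE; gen_atoms; clia.
  exists x, z, (mmul G (E b c)); split.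
  + move: Hx; rewrite !mmulE !mvarE (negbTE Hxc); gen_atoms; clia.
  + exact: P_add.
  + apply/ffunP => v; move/ffunP: Heq => /(_ v); rewrite !mmulE !mvarE; gen_atoms; clia.
- case: C => G [HG HMe]; right; right; exists (mmul G (E b c)); split; first exact: P_add.
  subst M'; aceq.
Qed.

Hypothesis Luniq : uniq L.

Lemma P_mone : P 0 (mone V).
Proof.
exists (nseq (size L) 0); split.
- by rewrite size_nseq.
- by elim: (size L) => //= k ->.
- apply/ffunP => v; rewrite !ffunE big1 // => k _; by rewrite nth_nseq; case: ifP.
Qed.

Lemma mingen_P m M : mingen L m M -> P m M.
Proof.
case=> [[a [Hs Hsum Hdvd]] Hmin].
have HQ : pow_ideal L m (prod_expr L a) by exists a; split=> // v.
by rewrite -(Hmin _ HQ Hdvd); exists a.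
Qed.

Lemma P_pow m M (W : mono V) : P m M -> (forall v, M v <= W v) -> pow_ideal L m W.
Proof. by case=> a [Hs Hsum HM] Hle; exists a; split=> // v; rewrite HM. Qed.

Lemma P_mingen m M : P m M -> mingen L m M.
Proof.
move=> HP; split; first exact: (P_pow HP).
move=> m' [b [Hs Hsum Hdvd]] Hle.
have HQ : P m (prod_expr L b) by exists b.
have Heq : prod_expr L b = M.
  apply: le_sum_eq; last by rewrite (P_deg HQ) (P_deg HP).
  by move=> v; apply: leq_trans (Hdvd v) (Hle v).
apply/ffunP => v; apply/eqP; rewrite eqn_leq Hle /=.
by rewrite -Heq; apply: Hdvd.
Qed.

Lemma Ledge_E a : 1 <= a <= size L ->
  exists p q, [/\ p != q, isE p q & Ledge L a = E p q].
Proof.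
move=> /andP [H1 H2]; have Hi : a.-1 < size L by lia.
have [p [q [Hpq HS]]] := Ledges (mem_nth set0 Hi).
exists p, q; split=> //; last by rewrite /Ledge HS edge_set.
by exists a.-1; rewrite HS edge_set.
Qed.

Lemma edge_mono_inj (S T : {set V}) : edge_mono S = edge_mono T -> S = T.
Proof.
move=> H; apply/setP => v; move/ffunP: H => /(_ v); rewrite !ffunE.
by case: (v \in S); case: (v \in T).
Qed.

Lemma expr_pos n0 a p q G X : 1 <= a <= size L -> Ledge L a = E p q -> P n0 G ->
  X = mmul (E p q) G -> exists g, is_expr L n0.+1 X g /\ 0 < nth 0 g a.-1.
Proof.
move=> /andP [H1 H2] HL [g Hg] HX; have Hi : a.-1 < size L by lia.
exists (set_nth 0 g a.-1 (nth 0 g a.-1).+1); split; last by rewrite nth_set_nth /= eqxx.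
have := expr_add Hg Hi; rewrite -/(Ledge L a) HL.
by case=> H3 H4 H5; split=> //; rewrite H5 HX; aceq.
Qed.

Lemma belongs_dec n X a : 1 <= n -> belongs L n X a ->
  1 <= a <= size L /\ exists G, P n.-1 G /\ X = mmul (Ledge L a) G.
Proof.
move=> Hn [Ha Hb]; split=> //.
case: (eqVneq n 1) Hb => [->|Hn1] /= Hb.
  by exists (mone V); split; [exact: P_mone | rewrite Hb; aceq].
case: Hb => [[_ _ [m3 [Hm3 ->]]] _].
by exists m3; split=> //; rewrite -subn1; exact: mingen_P.
Qed.

Lemma ex_min (Q : nat -> Prop) a : Q a -> exists c, [/\ c <= a, Q c & forall i, i < c -> ~ Q i].
Proof.
elim/ltn_ind: a => a IH Qa.
case: (classic (exists i, i < a /\ Q i)) => [[i [Hi Qi]]|Hno].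
  have [c [Hc Qc Hmin]] := IH i Hi Qi; exists c; split=> //; lia.
exists a; split=> // i Hi Qi; apply: Hno; by exists i.
Qed.

Lemma belongs_mk n X a G : 1 <= n -> 1 <= a <= size L -> P n.-1 G ->
  X = mmul (Ledge L a) G -> exists c, c <= a /\ belongs L n X c.
Proof.
move=> Hn Ha HG HX.
have [p [q [Hpq HEpq HL]]] := Ledge_E Ha.
case: (eqVneq n 1) => [Hn1|Hn1].
  subst n; exists a; split=> //; split=> //=.
  by rewrite HX (P0 HG) //; aceq.
have HXP : P n X.
  have := P_add HG HEpq; have -> : n.-1.+1 = n by lia.
  by rewrite HX HL; congr P; aceq.
pose Q i := 1 <= i <= size L /\ edge_dvd L 1 (Ledge L i) n X.
have HQa : Q a.
  split=> //; split.
  - apply: P_mingen; rewrite HL; have := P_add P_mone HEpq; congr P; aceq.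
  - exact: P_mingen.
  - exists G; split=> //; rewrite subn1; exact: P_mingen.
have [c [Hca [Hc1 Hc2] Hmin]] := ex_min HQa.
exists c; split=> //; split=> //.
rewrite (negbTE Hn1); split=> // i' /andP [Hi1 Hi2] Hd; apply: (Hmin i' Hi2); split=> //.
move: Hi2 Hc1; lia.
Qed.

Lemma belongs_zero n M b beta k : 1 <= n -> belongs L n M b -> is_expr L n M beta ->
  k < b.-1 -> nth 0 beta k = 0.
Proof.
move=> Hn [Hb1 Hb2] Hbeta Hk.
case: (posnP (nth 0 beta k)) => // Hpos; exfalso.
have Hks : k < size L by move: Hb1; lia.
have [m' [a' [Hm Ha' HM]]] := expr_rem Hbeta Hks Hpos.
case: (eqVneq n 1) Hb2 => [Hn1|Hn1] /= Hb2.
  move: Hm; rewrite Hn1 => -[Hm]; subst m'.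
  have H0 := P0 (ex_intro _ a' Ha') (erefl 0).
  have : nth set0 L k = nth set0 L b.-1.
    apply: edge_mono_inj; rewrite -[edge_mono (nth _ _ b.-1)]/(Ledge L b) -Hb2 HM H0.
    by apply/ffunP => v; rewrite !ffunE.
  have Hb' : b.-1 < size L by case/andP: Hb1 => *; lia.
  by move/eqP; rewrite nth_uniq // => /eqP; lia.
case: Hb2 => _ /(_ k.+1); apply; first by lia.
split.
- apply: P_mingen; exists (set_nth 0 (nseq (size L) 0) k 1).
  have := expr_add (m := 0) (M := mone V) (a := nseq (size L) 0) _ Hks.
  rewrite nth_nseq Hks; move/(_ _)=> H.
  have Hm0 : is_expr L 0 (mone V) (nseq (size L) 0).
    case: P_mone => a0 Ha0; split; [by rewrite size_nseq | by elim: (size L) => //= ? -> |].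
    apply/ffunP => v; rewrite !ffunE big1 // => i _; by rewrite nth_nseq; case: ifP.
  case: (H Hm0) => H3 H4 H5; split=> //; rewrite H5 /Ledge /=; apply/ffunP => v; rewrite !ffunE; lia.
- exact: P_mingen (ex_intro _ beta Hbeta).
- exists (prod_expr L a'); split.
    by apply: P_mingen; exists a'; rewrite subn1 Hm /=.
  by rewrite HM /Ledge /=; apply/ffunP => v; rewrite !ffunE; lia.
Qed.

Lemma lex_shift (x y z : seq nat) t j : lexlt x y -> (forall k, k < t -> nth 0 y k = 0) ->
  j < t -> 0 < nth 0 z j -> lexlt x z.
Proof.
elim: x y z t j => [|x0 x IH] [|y0 y] z t j //=.
move=> Hlex Hy Hj Hz.
have Hy0 : y0 = 0 by apply: (Hy 0); lia.
subst y0; move: Hlex; rewrite ltn0 /= => /andP [/eqP -> Hlex].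
case: z Hz => [|z0 z] Hz; first by rewrite nth_nil in Hz.
case: j Hj Hz => [|j] Hj Hz /=; first by rewrite Hz.
case: (posnP z0) => [->|Hz0]; last by apply/orP; left.
rewrite eqxx /=; apply: (IH y z t.-1 j Hlex) => //.
- move=> k Hk; apply: (Hy k.+1); lia.
- lia.
Qed.

End Aux.

Theorem lemma4p11 (V : finType) (e : rel V) (L : seq {set V})
  (n : nat) (s : seq (mono V)) (k' j : nat) (a b : nat) :
  simple_graph e -> edge_order e L ->
  1 <= n -> gens_list L n s ->
  1 <= k' -> 1 <= j <= k' -> k' < size s ->
  ~ msubset (colon_mm (Lg s j) (Lg s k'.+1))
            (colon (pow_ideal L n.+1) (Lg s k'.+1)) ->
  belongs L n (Lg s j) a -> belongs L n (Lg s k'.+1) b -> a < b ->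
  exists i c,
    [/\ 1 <= i <= k',
        gen_by_var (colon_mm (Lg s i) (Lg s k'.+1)),
        msubset (colon_mm (Lg s j) (Lg s k'.+1)) (colon_mm (Lg s i) (Lg s k'.+1)),
        belongs L n (Lg s i) c & c <= a].
Proof.
move=> Hsg Heo Hn Hgl Hk' Hj Hks Hnot HbN HbM Hab.
have Ledges : forall S : {set V}, S \in L -> exists p q, p != q /\ S = [set p; q].
  move=> S HS; have [x [y [Hxy ->]]] := (Heo.2 S).1 HS.
  exists x, y; split=> //; apply/eqP => Exy; subst y.
  by case: Hsg => Hirr _; rewrite Hirr in Hxy.
have Luniq := Heo.1.
case: Hgl => Hsu Hsmem Hsord.
have HMs : Lg s k'.+1 \in s by rewrite /Lg /=; apply: mem_nth.
have HMP : P L n (Lg s k'.+1) := mingen_P ((Hsmem _).1 HMs).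
have [Ha [G [HG HN]]] := belongs_dec Hn HbN.
have [p [q [Hpq HEpq HLa]]] := Ledge_E Ledges Luniq Ha.
have [w [Hw1 Hw2]] : exists w, colon_mm (Lg s j) (Lg s k'.+1) w /\
    ~ colon (pow_ideal L n.+1) (Lg s k'.+1) w.
  apply: NNPP => H; apply: Hnot => w Hw; apply: NNPP => H'; apply: H; by exists w.
move: Hw1 Hw2 Hnot HMP HbM HMs HbN HN.
set N := Lg s j; set M := Lg s k'.+1 => Hw1 Hw2 Hnot HMP HbM HMs HbN HN.
have [n0 Hn0] : exists n0, n = n0.+1 by exists n.-1; lia.
subst n.
have Hab1 : a.-1 < b.-1 by case/andP: Ha => *; lia.
have noC : forall G', P L n0 G' -> M <> mmul (E p q) G'.
  move=> G' HG' HMe.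
  have [g [Hg Hgpos]] := expr_pos Luniq Ha HLa HG' HMe.
  have := belongs_zero Ledges Luniq Hn HbM Hg Hab1; lia.
rewrite HLa in HN; rewrite HN in Hw1.
have := lemU Ledges Hpq HEpq HG HMP; rewrite /Concl /=.
case=> [[x [x' [Hbnd HP]]]|[[x [z [G0 [Hx HG0 Heq]]]]|[G' [HG' HMe]]]]; last first.
- by exfalso; exact: noC HG' HMe.
2: { exfalso; apply: Hw2; apply: (P_pow HP) => v.
  move: (Hbnd v) (Hw1 v); rewrite !ffunE; clia. }
set L0 := mmul (E p q) G0 in Heq.
have HeqV : forall v, M v + (v == x) = L0 v + (v == z).
  by move=> v; move/ffunP: Heq => /(_ v); rewrite !ffunE.
have Hxz : x != z.
  apply/eqP => Exz; subst z; apply: (noC G0 HG0); apply/ffunP => v.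
  have := HeqV v; rewrite -/L0; lia.
have HL0x : L0 x = (M x).+1 by have := HeqV x; rewrite eqxx (negbTE Hxz); lia.
have HL0P : P L n0.+1 L0.
  by have := P_add HG0 HEpq; congr P; rewrite /L0; aceq.
have HL0s : L0 \in s := (Hsmem L0).2 (P_mingen Ledges HL0P).
set i0 := index L0 s.
have Hi0 : i0 < size s by rewrite index_mem.
have Hnth : nth (mone V) s i0 = L0 := nth_index _ HL0s.
have Hi0k : i0 < k'.
  rewrite ltnNge; apply/negP => Hle.
  case: (eqVneq i0 k') => [Ei|Ni].
    have : M = L0 by rewrite /M /Lg /= -Ei Hnth.
    by move/ffunP => /(_ x); rewrite HL0x; lia.
  have Hlt : k' < i0 by lia.
  have := Hsord k' i0; rewrite Hlt Hi0 => /(_ isT).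
  rewrite Hnth -/(Lg s k'.+1) -/M.
  case=> aM [aL [HaM HaL Hlex]].
  have [g [Hg Hgpos]] := expr_pos Luniq Ha HLa HG0 (erefl L0).
  have := HaL.2 g Hg; rewrite (lex_shift Luniq Hlex _ Hab1 Hgpos) //.
  by move=> k Hk; apply: (belongs_zero Ledges Luniq Hn HbM HaM.1 Hk).
have key : forall w' : mono V, 0 < w' x -> colon_mm L0 M w'.
  move=> w' Hw' v; rewrite /mmul ffunE.
  have := HeqV v; case: (eqVneq v x) => [->|Hvx]; lia.
have HL0e : L0 = mmul (Ledge L a) G0 by rewrite HLa.
have [c [Hca Hbc]] := belongs_mk Ledges Luniq Hn Ha HG0 HL0e.
have HLi : Lg s i0.+1 = L0 by rewrite /Lg /= Hnth.
exists i0.+1, c; rewrite HLi; split=> //.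
- exists x => w'; split.
  + move=> H v; have := H x; rewrite /mmul ffunE HL0x => Hx'.
    rewrite !ffunE; case: (eqVneq v x) => [->|_] /=; lia.
  + by move=> H; apply: key; have := H x; rewrite !ffunE eqxx.
- move=> w' Hw'; apply: key.
  move: (Hw' x) Hx; rewrite HN !ffunE; clia.
Qed.
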